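(* Let $f(x,y,z)=5x^2+7y^2+70z^2$. (i) If $n\in\mathbb{N}$ satisfies $n\equiv 1\pmod 4$, or $n\equiv 2\pmod 4$, or $n\equiv 4\pmod 8$, then $70n-2$ is represented by $f$ locally. (ii) If $n\in\mathbb{N}$ satisfies $n\equiv 3\pmod 4$ or $n\equiv 8\pmod{16}$, then $70n-32$ is represented by $f$ locally.
   Context: An integer $m$ is represented by $f$ locally if there exist $x,y,z\in\mathbb{R}$ with $f(x,y,z)=m$ and, for every prime $p$, there exist $x,y,z\in\mathbb{Z}_p$ (the $p$-adic integers) with $f(x,y,z)=m$. *)

(* Defs.v *)
From HB Require Import structures.
From mathcomp Require Import all_boot all_order all_algebra.
From mathcomp Require Import reals.
Set Implicit Arguments. Unset Strict Implicit. Unset Printing Implicit Defensive.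
Import Order.TTheory GRing.Theory Num.Theory.
Local Open Scope ring_scope.

Definition f {R : comRingType} (x y z : R) : R :=
  5 * x ^+ 2 + 7 * y ^+ 2 + 70 * z ^+ 2.

(* p-adic integers, as the inverse limit Z_p = lim Z/p^k Z: an element is a
   compatible sequence of residues a k (taken mod p^k, represented by integers)
   with a (k+1) = a k (mod p^k).  Ring operations are componentwise, and two
   elements are equal iff they agree mod p^k at every level k. *)
Definition padic_int (p : nat) (a : nat -> int) : Prop :=
  forall k : nat, (a k.+1 = a k %[mod (p ^ k)%:Z])%Z.

Definition rep_Zp (p : nat) (m : int) : Prop :=
  exists x y z : nat -> int,
    [/\ padic_int p x, padic_int p y, padic_int p z &
      forall k : nat, (f (x k) (y k) (z k) = m %[mod (p ^ k)%:Z])%Z].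

Definition rep_R (R : realType) (m : int) : Prop :=
  exists x y z : R, f x y z = m%:~R.

Definition rep_locally (R : realType) (m : int) : Prop :=
  rep_R R m /\ forall p : nat, prime p -> rep_Zp p m.

(* Main.v *)
Require Import Defs.
From HB Require Import structures.
From mathcomp Require Import all_boot all_order all_algebra.
From mathcomp Require Import reals.
From mathcomp Require Import ring lra zify.
From Stdlib Require Import IndefiniteDescription Classical.
Import Order.TTheory GRing.Theory Num.Theory.
Local Open Scope ring_scope.

Definition dv (d a : int) := exists q : int, a = q * d.

Lemma PoszX (p k : nat) : Posz (p ^ k)%N = (Posz p) ^+ k.
Proof. elim: k => // k IH; by rewrite expnS PoszM IH exprS. Qed.

Lemma dv_mod (d a b : int) : dv d (a - b) -> (a = b %[mod d])%Z.
Proof. move=> [q hq]; apply/eqP; rewrite eqz_mod_dvd; apply/dvdzP; by exists q. Qed.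

Lemma dv_weak (P : int) (k j : nat) a : dv (P ^+ (k + j)) a -> dv (P ^+ k) a.
Proof. move=> [q ->]; exists (q * P ^+ j); rewrite exprD; ring. Qed.

Lemma build (p : nat) (P : nat -> int -> Prop) (t1 : int) :
  P 1%N t1 ->
  (forall k t, (0 < k)%N -> P k t -> exists t', P k.+1 t' /\ dv ((Posz p) ^+ k.-1) (t' - t)) ->
  exists s : nat -> int, padic_int p s /\ forall k, P k.+1 (s k).
Proof.
move=> h1 hs.
have H : forall k t, exists t', (0 < k)%N -> P k t -> P k.+1 t' /\ dv ((Posz p) ^+ k.-1) (t' - t).
  move=> k t; case: (classic ((0 < k)%N /\ P k t)) => [[a b]|nh].
    have [t' ht'] := hs k t a b; by exists t'.
  by exists t => a b; exfalso; apply: nh.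
pose nx k t := proj1_sig (constructive_indefinite_description _ (H k t)).
have nxP k t : (0 < k)%N -> P k t -> P k.+1 (nx k t) /\ dv ((Posz p) ^+ k.-1) (nx k t - t).
  exact: (proj2_sig (constructive_indefinite_description _ (H k t))).
pose fix s k := if k is k'.+1 then nx k (s k') else t1.
have sP : forall k, P k.+1 (s k).
  elim=> [//|k IH] /=; by case: (nxP k.+1 (s k) isT IH).
exists s; split => // k; apply: dv_mod => /=.
by case: (nxP k.+1 (s k) isT (sP k)) => _; rewrite PoszX.
Qed.

Lemma hensel_odd (p : nat) (A B t0 u : int) : (0 < p)%N ->
  dv (Posz p) (A * t0 ^+ 2 - B) -> dv (Posz p) (2 * u * A * t0 - 1) ->
  exists t : nat -> int, padic_int p t /\ forall k, dv ((Posz p) ^+ k) (A * t k ^+ 2 - B).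
Proof.
move=> p0 h1 [v hv].
pose Q k t := dv ((Posz p) ^+ k) (A * t ^+ 2 - B) /\ dv (Posz p) (t - t0).
have [s [hs hsP]] : exists s : nat -> int, padic_int p s /\ forall k, Q k.+1 (s k).
  apply: (@build _ Q t0); first by split; [rewrite expr1 | exists 0; ring].
  move=> [//|k] t _ [[q hq] [w hw]] /=.
  pose P := Posz p.
  exists (t + P ^+ k.+1 * (- q * u)); split; last first.
    by exists (P * (- q * u)); rewrite exprS; ring.
  split.
    exists (- q * (v + 2 * u * A * w) + A * P ^+ k * (q * u) ^+ 2).
    have ht : t = t0 + w * P by rewrite -hw; ring.
    have e : A * t ^+ 2 - B = (A * t ^+ 2 - B) by [].
    have E1 : P ^+ k.+1 = P * P ^+ k by rewrite exprS.
    have E2 : P ^+ k.+2 = P * (P * P ^+ k) by rewrite !exprS.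
    rewrite E1 in hq; rewrite E1 E2.
    have -> : A * (t + P * (P ^+ k) * (- q * u)) ^+ 2 - B
       = (A * t ^+ 2 - B) - q * P * P ^+ k * (2 * u * A * t - 1) - q * P * P ^+ k
         + A * (P * P ^+ k) ^+ 2 * (q * u) ^+ 2 by ring.
    rewrite hq ht.
    have -> : 2 * u * A * (t0 + w * P) - 1 = (2 * u * A * t0 - 1) + 2 * u * A * w * P by ring.
    rewrite hv; ring.
  exists (w + P ^+ k * (- q * u)); rewrite -[t](subrK t0) hw exprS; ring.
exists s; split => // k; case: (hsP k) => h _.
by move: h; rewrite -addn1; apply: dv_weak.
Qed.

Lemma hensel_2 (A B t0 a b : int) : A = 2 * a + 1 -> t0 = 2 * b + 1 ->
  dv 8 (A * t0 ^+ 2 - B) ->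
  exists t : nat -> int, padic_int 2 t /\ forall k, dv (2 ^+ k) (A * t k ^+ 2 - B).
Proof.
move=> hA ht0 h1.
pose Q k t := dv (2 ^+ (k + 2)) (A * t ^+ 2 - B) /\ exists c, t = 2 * c + 1.
have [s [hs hsP]] : exists s : nat -> int, padic_int 2 s /\ forall k, Q k.+1 (s k).
  apply: (@build _ Q t0); first by split; [ | by exists b].
  move=> [//|k] t _ [[q hq] [c hc]] /=.
  exists (t + 2 ^+ k.+2 * q); split; last first.
    by exists (4 * q); rewrite !exprS; ring.
  split; last by exists (c + 2 ^+ k.+1 * q); rewrite hc !exprS; ring.
  exists (q * (2 * a * c + a + c + 1) + A * 2 ^+ k * q ^+ 2).
  have E1 : (2:int) ^+ (k.+1 + 2) = 2 * (2 * (2 * 2 ^+ k)) by rewrite addn2 !exprS.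
  have E2 : (2:int) ^+ (k.+2 + 2) = 2 * (2 * (2 * (2 * 2 ^+ k))) by rewrite addn2 !exprS.
  have E3 : (2:int) ^+ k.+2 = 2 * (2 * 2 ^+ k) by rewrite !exprS.
  rewrite E1 in hq; rewrite E2 E3.
  have -> : A * (t + 2 * (2 * 2 ^+ k) * q) ^+ 2 - B
     = (A * t ^+ 2 - B) + 2 * (2 * 2 ^+ k) * q * 2 * A * t + A * (2 * (2 * 2 ^+ k) * q) ^+ 2 by ring.
  rewrite hq hc hA; ring.
exists s; split => // k; case: (hsP k) => h _.
by move: h; rewrite addSn -addnS; apply: dv_weak.
Qed.

Lemma dvz_nat (p : nat) (a : int) : (Posz p %| a)%Z = (p %| `|a|)%N.
Proof. by []. Qed.

Lemma sq_inj (p : nat) (A : int) (i j : nat) : prime p -> ~~ (p %| `|A|)%N ->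
  (i < p.+1 %/ 2)%N -> (j < p.+1 %/ 2)%N ->
  (Posz p %| A * ((Posz i) ^+ 2 - (Posz j) ^+ 2))%Z -> i = j.
Proof.
move=> pp pA hi hj.
have -> : A * ((Posz i) ^+ 2 - (Posz j) ^+ 2) = A * ((Posz i - Posz j) * Posz (i + j)) by rewrite PoszD; ring.
rewrite dvz_nat !abszM !Euclid_dvdM // (negbTE pA) /= => /orP [h|h].
  have : (`|Posz i - Posz j| == 0)%N.
    apply/contraT => nz; have := dvdn_leq _ h; rewrite lt0n nz => /(_ isT); lia.
  by rewrite distn_eq0 => /eqP.
have : ((i + j) == 0)%N.
  apply/contraT => nz; have := dvdn_leq _ h; rewrite lt0n nz => /(_ isT) /=; lia.
lia.
Qed.

Lemma modp_lt (p : nat) (v : int) : (0 < p)%N -> (`|(v %% Posz p)%Z| < p)%N.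
Proof.
move=> p0; have h1 : 0 <= (v %% Posz p)%Z by apply: modz_ge0; rewrite eqz_nat -lt0n.
have h2 : (v %% Posz p)%Z < Posz p by apply: ltz_pmod; rewrite ltz_nat.
by rewrite -ltz_nat gez0_abs.
Qed.

Lemma pigeon (p : nat) (c : int) : prime p -> ~~ (2 %| p)%N -> ~~ (p %| 5)%N -> ~~ (p %| 7)%N ->
  exists a b : nat, [/\ (a < p)%N, (b < p)%N & dv (Posz p) (5 * (Posz a) ^+ 2 + 7 * (Posz b) ^+ 2 - c)].
Proof.
move=> pp p2 p5 p7.
have p0 : (0 < p)%N by apply: prime_gt0.
pose k := (p.+1 %/ 2)%N.
have kp : (k <= p)%N by rewrite /k; lia.
pose h (v : int) : 'I_p := Ordinal (@modp_lt p v p0).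
have hE v w : h v = h w -> (Posz p %| v - w)%Z.
  move=> /(congr1 val) /= e; rewrite -eqz_mod_dvd; apply/eqP.
  have pn : Posz p != 0 by rewrite eqz_nat -lt0n.
  by rewrite -(gez0_abs (modz_ge0 v pn)) e gez0_abs // modz_ge0.
pose g1 (i : 'I_k) := h (5 * (Posz i) ^+ 2).
pose g2 (i : 'I_k) := h (c - 7 * (Posz i) ^+ 2).
have i1 : injective g1.
  move=> i j /hE e; apply: val_inj; apply: (@sq_inj p 5) => //; first exact: ltn_ord.
    exact: ltn_ord.
  by move: e; rewrite mulrBr.
have i2 : injective g2.
  move=> i j /hE e; apply: val_inj; apply/esym; apply: (@sq_inj p 7) => //; first exact: ltn_ord.
    exact: ltn_ord.
  by move: e; rewrite (_ : c - 7 * _ - _ = 7 * ((Posz j) ^+ 2 - (Posz i) ^+ 2)); last ring.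
have : ~~ [disjoint [set g1 i | i in 'I_k] & [set g2 i | i in 'I_k]].
  apply/negP => dj.
  have := max_card ([set g1 i | i in 'I_k] :|: [set g2 i | i in 'I_k]).
  rewrite cardsU (card_imset _ i1) (card_imset _ i2).
  move: dj; rewrite -setI_eq0 => /eqP ->; rewrite cards0 card_ord subn0 /k.
  move=> H; have cp := card_ord p; rewrite cp in H. lia.
rewrite -setI_eq0 => /set0Pn [x]; rewrite in_setI => /andP [/imsetP [i _ ->] /imsetP [j _ e]].
exists i, j; split; [exact: (leq_trans (ltn_ord i) kp) | exact: (leq_trans (ltn_ord j) kp) |].
have := hE _ _ e; move/dvdzP => [q hq]; exists q; rewrite -hq; ring.
Qed.

Lemma dvP (d a : int) : reflect (dv d a) (d %| a)%Z.
Proof. exact: dvdzP. Qed.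

Lemma padic_const p (c : int) : padic_int p (fun _ => c).
Proof. by []. Qed.

Lemma padic_scale p (c : int) t : padic_int p t -> padic_int p (fun k => c * t k).
Proof.
move=> h k; apply/eqP; rewrite eqz_mod_dvd; move: (h k) => /eqP; rewrite eqz_mod_dvd.
move/dvP=> [q hq]; apply/dvP; exists (c * q); rewrite -mulrA -hq; ring.
Qed.

Lemma rep_gen p m (x y z : nat -> int) : padic_int p x -> padic_int p y -> padic_int p z ->
  (forall k, dv (Posz p ^+ k) (f (x k) (y k) (z k) - m)) -> rep_Zp p m.
Proof.
move=> hx hy hz h; exists x, y, z; split => // k; apply: dv_mod; rewrite PoszX; exact: h.
Qed.

Lemma rep_x p m (y z : int) t : padic_int p t ->
  (forall k, dv (Posz p ^+ k) (5 * t k ^+ 2 - (m - 7 * y ^+ 2 - 70 * z ^+ 2))) -> rep_Zp p m.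
Proof.
move=> ht h; apply: (@rep_gen p m t (fun _ => y) (fun _ => z) ht) => // k.
have [q hq] := h k; exists q; rewrite -hq /f; ring.
Qed.

Lemma rep_y p m (x z : int) t : padic_int p t ->
  (forall k, dv (Posz p ^+ k) (7 * t k ^+ 2 - (m - 5 * x ^+ 2 - 70 * z ^+ 2))) -> rep_Zp p m.
Proof.
move=> ht h; apply: (@rep_gen p m (fun _ => x) t (fun _ => z) _ ht) => // k.
have [q hq] := h k; exists q; rewrite -hq /f; ring.
Qed.

Lemma inv_ex (p N : nat) : prime p -> ~~ (p %| 2 * N)%N ->
  exists u : int, dv (Posz p) (2 * u * Posz N - 1).
Proof.
move=> pp nd.
have [a _ ha] := Bezoutl (2 * N) (prime_gt0 pp).
have : coprime p (2 * N) by rewrite prime_coprime.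
rewrite /coprime => /eqP g; rewrite g in ha.
case/dvdnP: ha => q hq.
exists (- Posz a); exists (- Posz q).
have := congr1 Posz hq; rewrite PoszD !PoszM => e.
have -> : 2 * - Posz a * Posz N - 1 = - (1 + Posz a * (2 * Posz N)) by ring.
by rewrite e; ring.
Qed.

Lemma odd_rep p m : prime p -> p != 2%N -> p != 5%N -> p != 7%N -> rep_Zp p m.
Proof.
move=> pp n2 n5 n7.
have p0 := prime_gt0 pp.
have p2 : ~~ (2 %| p)%N by rewrite dvdn_prime2 // eq_sym.
have p5 : ~~ (p %| 5)%N by rewrite dvdn_prime2.
have p7 : ~~ (p %| 7)%N by rewrite dvdn_prime2.
have p2' : ~~ (p %| 2)%N by rewrite dvdn_prime2.
have p70 : ~~ (p %| 70)%N.
  by rewrite (_ : 70 = 2 * (5 * 7))%N // !Euclid_dvdM // negb_or p2' negb_or p5 p7.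
have [z0 hz] : exists z0 : int, ~~ (Posz p %| m - 70 * z0 ^+ 2)%Z.
  case hm: (Posz p %| m)%Z.
    exists 1; apply/negP => /dvP [q1 hq1]; move/dvP: hm => [q2 hq2].
    move: p70; rewrite (_ : (p %| 70)%N = (Posz p %| 70)%Z) // => /negP; apply; apply/dvP; exists (q2 - q1).
    transitivity (m - (m - 70 * 1 ^+ 2)); first ring.
    rewrite hq1 hq2; ring.
  by exists 0; rewrite (_ : m - 70 * 0 ^+ 2 = m) ?hm //; ring.
have [a [b [ap bp hab]]] := @pigeon p (m - 70 * z0 ^+ 2) pp p2 p5 p7.
have ndiv (x : nat) : (0 < x)%N -> (x < p)%N -> ~~ (p %| x)%N.
  by move=> x0 xp; apply/negP => /(dvdn_leq x0); rewrite leqNgt xp.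
case: (posnP a) => [a0|apos].
  case: (posnP b) => [b0|bpos].
    exfalso; move: hz => /negP; apply; apply/dvP; case: hab => q hq; exists (- q).
    by rewrite mulNr -hq a0 b0; ring.
  have [u hu] : exists u : int, dv (Posz p) (2 * u * 7 * Posz b - 1).
    have [u hu] := @inv_ex p (7 * b) pp (ltac:(by rewrite !Euclid_dvdM // negb_or p2' negb_or p7 ndiv)).
    by exists u; move: hu; rewrite PoszM mulrA.
  have [t [ht htk]] := @hensel_odd p 7 (m - 5 * 0 ^+ 2 - 70 * z0 ^+ 2) (Posz b) u p0
    (ltac:(case: hab => q hq; exists q; rewrite -hq a0; ring)) hu.
  exact: rep_y ht htk.
have [u hu] : exists u : int, dv (Posz p) (2 * u * 5 * Posz a - 1).
  have [u hu] := @inv_ex p (5 * a) pp (ltac:(by rewrite !Euclid_dvdM // negb_or p2' negb_or p5 ndiv)).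
  by exists u; move: hu; rewrite PoszM mulrA.
have [t [ht htk]] := @hensel_odd p 5 (m - 7 * Posz b ^+ 2 - 70 * z0 ^+ 2) (Posz a) u p0
  (ltac:(case: hab => q hq; exists q; rewrite -hq; ring)) hu.
exact: rep_x ht htk.
Qed.

Lemma real_rep (R : realType) (m : int) : 0 <= m -> rep_R R m.
Proof.
move=> m0; exists (Num.sqrt (m%:~R / 5)), 0, 0; rewrite /f sqr_sqrtr.
  by rewrite expr0n /=; field.
by apply: divr_ge0; rewrite ?ler0z.
Qed.

Lemma two_x (m y z : int) : dv 8 (5 - (m - 7 * y ^+ 2 - 70 * z ^+ 2)) -> rep_Zp 2 m.
Proof.
move=> [q hq].
have [t [ht htk]] := @hensel_2 5 (m - 7 * y ^+ 2 - 70 * z ^+ 2) 1 2 0 erefl erefl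
  (ltac:(exists q; rewrite -hq; ring)).
exact: rep_x ht htk.
Qed.

Lemma two_16 (m y z : int) : dv 8 (5 - (m - 7 * y ^+ 2 - 70 * z ^+ 2)) -> rep_Zp 2 (16 * m).
Proof.
move=> [q hq].
have [t [ht htk]] := @hensel_2 5 (m - 7 * y ^+ 2 - 70 * z ^+ 2) 1 2 0 erefl erefl
  (ltac:(exists q; rewrite -hq; ring)).
apply: (@rep_gen 2 _ (fun k => 4 * t k) (fun _ => 4 * y) (fun _ => 4 * z)) => //.
  exact: padic_scale.
move=> k; have [r hr] := htk k; exists (16 * r).
rewrite /f -mulrA -hr; ring.
Qed.

Lemma two_z (m : int) : dv 8 (35 - m) -> rep_Zp 2 (2 * m).
Proof.
move=> [q hq].
have [t [ht htk]] := @hensel_2 35 m 1 17 0 erefl erefl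
  (ltac:(exists q; rewrite -hq; ring)).
apply: (@rep_gen 2 _ (fun _ => 0) (fun _ => 0) t) => // k.
have [r hr] := htk k; exists (2 * r).
rewrite /f -mulrA -hr; ring.
Qed.

Lemma five_rep (m : int) : dv 5 (28 - m) -> rep_Zp 5 m.
Proof.
move=> [q hq].
have [t [ht htk]] := @hensel_odd 5 7 (m - 5 * 0 ^+ 2 - 70 * 0 ^+ 2) 2 2 isT
  (ltac:(exists q; rewrite -hq; ring)) (ltac:(exists 11; ring)).
exact: rep_y ht htk.
Qed.

Lemma seven_rep (m t0 u : int) : dv 7 (5 * t0 ^+ 2 - m) -> dv 7 (2 * u * 5 * t0 - 1) -> rep_Zp 7 m.
Proof.
move=> [q hq] hu.
have [t [ht htk]] := @hensel_odd 7 5 (m - 7 * 0 ^+ 2 - 70 * 0 ^+ 2) t0 u isT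
  (ltac:(exists q; rewrite -hq; ring)) hu.
exact: rep_x ht htk.
Qed.

Theorem lemma4p1 (R : realType) :
  (forall n : nat,
     [|| n %% 4 == 1, n %% 4 == 2 | n %% 8 == 4]%N ->
     rep_locally R (70 * n%:Z - 2)) /\
  (forall n : nat,
     [|| n %% 4 == 3 | n %% 16 == 8]%N ->
     rep_locally R (70 * n%:Z - 32)).
Proof.
split => n hn; split.
- apply: real_rep; have n1 : (1 <= n)%N by case/or3P: hn => /eqP h; lia.
  lia.
- move=> p pp.
  case: (eqVneq p 2) => [->|n2].
    case/or3P: hn => /eqP h.
    + have [j hj] : exists j : nat, n = (4 * j + 1)%N by exists (n %/ 4)%N; lia.
      apply: (@two_x _ 1 0); exists (-7 - 35 * Posz j); rewrite hj PoszD PoszM; ring.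
    + have [j hj] : exists j : nat, n = (4 * j + 2)%N by exists (n %/ 4)%N; lia.
      apply: (@two_x _ 1 1); exists (-7 - 35 * Posz j); rewrite hj PoszD PoszM; ring.
    + have [j hj] : exists j : nat, n = (8 * j + 4)%N by exists (n %/ 8)%N; lia.
      rewrite (_ : 70 * n%:Z - 2 = 2 * (35 * n%:Z - 1)); last ring.
      apply: two_z; exists (-13 - 35 * Posz j); rewrite hj PoszD PoszM; ring.
  case: (eqVneq p 5) => [->|n5].
    apply: five_rep; exists (6 - 14 * Posz n); ring.
  case: (eqVneq p 7) => [->|n7].
    apply: (@seven_rep _ 1 5); [exists (1 - 10 * Posz n) | exists 7]; ring.
  exact: odd_rep.
- apply: real_rep; have n1 : (3 <= n)%N by case/orP: hn => /eqP h; lia.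
  lia.
- move=> p pp.
  case: (eqVneq p 2) => [->|n2].
    case/orP: hn => /eqP h.
    + have [j hj] : exists j : nat, n = (4 * j + 3)%N by exists (n %/ 4)%N; lia.
      apply: (@two_x _ 1 1); exists (-12 - 35 * Posz j); rewrite hj PoszD PoszM; ring.
    + have [i [r [hr hi]]] : exists i r : nat, (r < 4)%N /\ n = (64 * i + 16 * r + 8)%N.
        by exists (n %/ 64)%N, ((n %% 64) %/ 16)%N; lia.
      rewrite (_ : 70 * n%:Z - 32 = 16 * (280 * Posz i + 70 * Posz r + 33)); last first.
        have e : Posz n = 64 * Posz i + 16 * Posz r + 8 by rewrite hi; lia.
        rewrite e; ring.
      clear hi; move: hr; case: r => [|[|[|[|//]]]] _.
      * apply: (@two_16 _ 2 0); exists (- 35 * Posz i); ring.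
      * apply: (@two_16 _ 2 1); exists (- 35 * Posz i); ring.
      * apply: (@two_16 _ 0 0); exists (- 21 - 35 * Posz i); ring.
      * apply: (@two_16 _ 0 1); exists (- 21 - 35 * Posz i); ring.
  case: (eqVneq p 5) => [->|n5].
    apply: five_rep; exists (12 - 14 * Posz n); ring.
  case: (eqVneq p 7) => [->|n7].
    apply: (@seven_rep _ 3 4); [exists (11 - 10 * Posz n) | exists 17]; ring.
  exact: odd_rep.
Qed.
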